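(* In an $a^2bc$-tiling, at every vertex the numbers of copies of $\beta$, of $\gamma$ and of $\delta$ have the same parity (all even or all odd). Consequently every vertex containing $\alpha$ has even numbers of $\beta$, $\gamma$, $\delta$.
   Context: An $a^2bc$-quadrilateral is a simple spherical quadrilateral with edges $a,a,b,c$ in cyclic order, $a,b,c$ pairwise distinct; $\alpha$ = angle between the two $a$-edges; $\beta$ = angle between an $a$-edge and the $b$-edge; $\delta$ = angle between the $b$-edge and the $c$-edge; $\gamma$ = angle between the $c$-edge and an $a$-edge. An $a^2bc$-tiling is an edge-to-edge tiling of the sphere by $f$ congruent copies of such a quadrilateral with all vertices of degree $\ge3$. *)

(* Defs.v *)
From HB Require Import structures.
From mathcomp Require Import all_boot all_order all_algebra.
From mathcomp Require Import reals trigo.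
Set Implicit Arguments. Unset Strict Implicit. Unset Printing Implicit Defensive.
Import Order.TTheory GRing.Theory Num.Theory.

(* Around the prototile the corners
   come in the cyclic order alpha, beta, delta, gamma, with edges
   alpha-beta : a,  beta-delta : b,  delta-gamma : c,  gamma-alpha : a. *)
Inductive angle := Alpha | Beta | Gamma | Delta.

Definition angle_to_ord (x : angle) : 'I_4 :=
  match x with
  | Alpha => @Ordinal 4 0 isT | Beta => @Ordinal 4 1 isT
  | Gamma => @Ordinal 4 2 isT | Delta => @Ordinal 4 3 isT end.
Definition ord_to_angle (i : 'I_4) : angle :=
  match val i with 0 => Alpha | 1 => Beta | 2 => Gamma | _ => Delta end.
Lemma angle_ordK : cancel angle_to_ord ord_to_angle. Proof. by case. Qed.
HB.instance Definition _ := Finite.copy angle (can_type angle_ordK).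

Definition nxt (x : angle) : angle :=
  match x with Alpha => Beta | Beta => Delta | Delta => Gamma | Gamma => Alpha end.

(* the side of a tile "starting at corner x" joins corner x to corner nxt x;
   its length in the prototile with edges a,a,b,c *)
Definition side_len (R : Type) (a b c : R) (x : angle) : R :=
  match x with Alpha => a | Beta => b | Delta => c | Gamma => a end.

Section Tiling.
Variables (R : realType) (a b c : R) (T V : finType).
(* vert t x : the vertex of the tiling at which the x-corner of tile t sits *)
Variable vert : T -> angle -> V.
(* glue s : the tile side glued to tile side s (edge-to-edge pairing);
   a tile side is a pair (t, x) denoting the side from corner x to nxt x *)
Variable glue : T * angle -> T * angle.
Variable ang : angle -> R.

Definition corner_vert (k : T * angle) : V := vert k.1 k.2.
Definition side_ends (s : T * angle) : V * V := (vert s.1 s.2, vert s.1 (nxt s.2)).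

Definition on_side (k s : T * angle) : bool :=
  (k.1 == s.1) && ((k.2 == s.2) || (k.2 == nxt s.2)).

(* two corners at the same vertex are adjacent around that vertex when they
   lie on two tile sides that are glued together *)
Definition corner_adj (k1 k2 : T * angle) : bool :=
  (corner_vert k1 == corner_vert k2) &&
  [exists s : T * angle, on_side k1 s && on_side k2 (glue s)].

Definition tile_adj (t1 t2 : T) : bool :=
  [exists x : angle, (glue (t1, x)).1 == t2].

Definition nang (v : V) (x : angle) : nat := #|[set t : T | vert t x == v]|.

Definition a2bc_tiling : Prop :=
  [/\
      [/\ a != b, b != c & a != c],
      (* each tile is a simple quadrilateral: its four corners are distinct vertices *)
      (forall t, injective (vert t)),
      [/\ (forall s, glue (glue s) = s), (forall s, glue s != s),
          (forall s, let e := side_ends s in let e' := side_ends (glue s) in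
             e' = e \/ e' = (e.2, e.1))
        & (forall s, side_len a b c (glue s).2 = side_len a b c s.2)],
      (forall v : V, 3 <= #|[set k : T * angle | corner_vert k == v]|) /\
      (* angle values: positive; the angles at each vertex sum to 2 pi;
         the angle sum of the spherical quadrilateral exceeds 2 pi
         (its area, by Gauss-Bonnet, is positive) *)
      [/\ (forall x, 0 < ang x)%R,
          (forall v : V,
             \sum_(k : T * angle | corner_vert k == v) ang k.2 = 2 * pi)%R
        & (2 * pi < ang Alpha + ang Beta + ang Gamma + ang Delta)%R] &
      (* surface/sphere conditions: the corners around each vertex form one
         cycle, the tiling is connected, and Euler's formula V - E + F = 2
         holds (E = 2F for quadrilaterals) *)
      [/\ (forall k1 k2 : T * angle, corner_vert k1 = corner_vert k2 ->
             connect corner_adj k1 k2),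
          (forall t1 t2 : T, connect tile_adj t1 t2)
        & #|V| = #|T| + 2]].

End Tiling.

(* Main.v *)
Require Import Defs.
From mathcomp Require Import all_boot all_order all_algebra.
From mathcomp Require Import reals trigo.
From mathcomp Require Import lra.
Import Order.TTheory GRing.Theory Num.Theory.

Lemma inv_even (X : finType) (g : X -> X) :
  (forall x, g (g x) = x) -> (forall x, g x != x) ->
  forall S : {set X}, (forall x, x \in S -> g x \in S) -> ~~ odd #|S|.
Proof.
move=> gK gN.
suff H : forall n (S : {set X}), #|S| = n -> (forall x, x \in S -> g x \in S) -> ~~ odd n.
  by move=> S HS; apply: (H _ S).
elim/ltn_ind=> n IH S cS HS.
have [S0|[x xS]] := set_0Vmem S.
  by move: cS; rewrite S0 cards0 => <-.
have gxS := HS x xS.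
have gxx : g x != x := gN x.
set S' := S :\ x :\ g x.
have cS' : #|S| = #|S'|.+2.
  rewrite (cardsD1 x S) xS (cardsD1 (g x) (S :\ x)) !inE gxx gxS /=.
  by rewrite add1n.
have HS' : forall y, y \in S' -> g y \in S'.
  move=> y; rewrite !inE => /and3P[ygx yx yS].
  rewrite HS // andbT.
  have h1 : g y != g x by apply: contra yx => /eqP e; rewrite -(gK y) e gK.
  have h2 : g y != x by apply: contra ygx => /eqP e; rewrite -(gK y) e.
  by rewrite h1 h2.
have lt : #|S'| < n by rewrite -cS cS'.
have := IH #|S'| lt S' erefl HS'.
by rewrite -cS cS' /=; case: odd.
Qed.

Lemma aux_ineq (R : realFieldType) (x y z w S p : R) :
  (p < x + y + z + w -> 0 <= S -> x + (y + (z + (w + S))) = p -> False)%R.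
Proof. move=> *; lra. Qed.

Section Main.
Variables (R : realType) (a b c : R) (T V : finType)
    (vert : T -> angle -> V) (glue : T * angle -> T * angle)
    (ang : angle -> R).

Lemma side_count (v : V) (x y : angle) : x != y -> (forall t, injective (vert t)) ->
  #|[set s : T * angle | (s.2 == x) && ((vert s.1 x == v) || (vert s.1 y == v))]|
  = nang vert v x + nang vert v y.
Proof.
move=> xy inj.
have -> : [set s : T * angle | (s.2 == x) && ((vert s.1 x == v) || (vert s.1 y == v))]
  = (fun t => (t, x)) @: ([set t | vert t x == v] :|: [set t | vert t y == v]).
  apply/setP=> [[t z]]; rewrite !inE /=.
  apply/idP/imsetP.
    move=> /andP[/eqP -> H]; exists t => //; by rewrite !inE.
  by move=> [t' H [-> ->]]; rewrite eqxx /=; move: H; rewrite !inE.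
rewrite card_imset; last by move=> t1 t2 [].
rewrite cardsU /nang.
have -> : [set t | vert t x == v] :&: [set t | vert t y == v] = set0.
  apply/setP=> t; rewrite !inE; apply/negP => /andP[/eqP e1 /eqP e2].
  by move: xy; rewrite (inj t x y) ?eqxx // e1 e2.
by rewrite cards0 subn0.
Qed.

End Main.

Theorem lemma6 (R : realType) (a b c : R) (T V : finType)
    (vert : T -> angle -> V) (glue : T * angle -> T * angle)
    (ang : angle -> R) :
  a2bc_tiling a b c vert glue ang ->
  forall v : V,
    (odd (nang vert v Beta) = odd (nang vert v Gamma) /\
     odd (nang vert v Gamma) = odd (nang vert v Delta)) /\
    (0 < nang vert v Alpha ->
       [/\ ~~ odd (nang vert v Beta), ~~ odd (nang vert v Gamma)
         & ~~ odd (nang vert v Delta)]).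
Proof.
move=> [[ab bc ac] inj [gK gN gE gL] [_ [angP angS angT]] _] v.
have ends : forall s, (vert s.1 s.2 == v) || (vert s.1 (nxt s.2) == v) ->
    (vert (glue s).1 (glue s).2 == v) || (vert (glue s).1 (nxt (glue s).2) == v).
  move=> s; case: (gE s); rewrite /side_ends /= => -[-> ->] //; by rewrite orbC.
have pb : ~~ odd (nang vert v Beta + nang vert v Delta).
  rewrite -(@side_count T V vert v _ _ _ inj) //.
  apply: (inv_even _ _ gK gN) => s; rewrite !inE => /andP[/eqP s2 H].
  have l2 : (glue s).2 = Beta.
    move: (gL s); rewrite s2 /=.
    case: (glue s).2 => //= e; [by move: ab; rewrite e eqxx
      | by move: ab; rewrite e eqxx | by move: bc; rewrite e eqxx].
  by rewrite l2 eqxx /=; have := ends s; rewrite s2 l2 /=; apply.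
have pc : ~~ odd (nang vert v Delta + nang vert v Gamma).
  rewrite -(@side_count T V vert v _ _ _ inj) //.
  apply: (inv_even _ _ gK gN) => s; rewrite !inE => /andP[/eqP s2 H].
  have l2 : (glue s).2 = Delta.
    move: (gL s); rewrite s2 /=.
    case: (glue s).2 => //= e; [by move: ac; rewrite e eqxx
      | by move: bc; rewrite e eqxx | by move: ac; rewrite e eqxx].
  by rewrite l2 eqxx /=; have := ends s; rewrite s2 l2 /=; apply.
rewrite !oddD in pb pc.
have e1 : odd (nang vert v Beta) = odd (nang vert v Delta)
  by move: pb; case: odd; case: odd.
have e2 : odd (nang vert v Delta) = odd (nang vert v Gamma)
  by move: pc; case: odd; case: odd.
split; first by rewrite e1 e2.
move=> hA.
case Ho: (odd (nang vert v Beta)); last by rewrite -e2 -e1 Ho.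
exfalso.
have pos : forall x, odd (nang vert v x) -> exists t, vert t x = v.
  move=> x; rewrite /nang; case: (set_0Vmem [set t | vert t x == v]) => [->|[t]].
    by rewrite cards0.
  by rewrite inE => /eqP; exists t.
have [tA hTA] : exists t, vert t Alpha = v.
  move: hA; rewrite /nang card_gt0 => /set0Pn [t]; rewrite inE => /eqP; by exists t.
have [tB hTB] := pos Beta Ho.
have oG : odd (nang vert v Gamma) by rewrite -e2 -e1.
have oD : odd (nang vert v Delta) by rewrite -e1.
have [tG hTG] := pos Gamma oG.
have [tD hTD] := pos Delta oD.
have := angS v.
rewrite (bigD1 (tA, Alpha)) /corner_vert /=; last by rewrite hTA.
rewrite (bigD1 (tB, Beta)) /=; last by rewrite hTB eqxx !xpair_eqE !andbF.
rewrite (bigD1 (tG, Gamma)) /=; last by rewrite hTG eqxx !xpair_eqE !andbF.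
rewrite (bigD1 (tD, Delta)) /=; last by rewrite hTD eqxx !xpair_eqE !andbF.
have : (0 <= \sum_(i | ((vert i.1 i.2 == v) && (i != (tA, Alpha)) && (i != (tB, Beta)))
           && (i != (tG, Gamma)) && (i != (tD, Delta))) ang i.2)%R.
  by apply: sumr_ge0 => i _; apply: ltW.
move=> h2 h3; exact: (@aux_ineq _ _ _ _ _ _ _ angT h2 h3).
Qed.
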